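(* Let $n$ be an odd prime and $g<n$ a positive integer which is a generator of $U(\mathbb Z/n\mathbb Z)$. Let $C=circ(c_1,\dots,c_n)$ be a real circulant matrix with eigenvalues $\lambda_k=\sum_{\ell=1}^{n}c_\ell\,\omega^{(k-1)(\ell-1)}$, $1\le k\le n$, where $\omega=\cos\frac{2\pi}{n}+i\sin\frac{2\pi}{n}$, and let $A=Q_gC$ (a real $g$-circulant matrix). Then the eigenvalues of $A$ are $$\lambda_1,\ \beta^{\frac{1}{n-1}},\ \beta^{\frac{1}{n-1}}\varphi,\ \beta^{\frac{1}{n-1}}\varphi^2,\ \dots,\ \beta^{\frac{1}{n-1}}\varphi^{n-2},$$ where $\varphi=\cos\frac{2\pi}{n-1}+i\sin\frac{2\pi}{n-1}$ and $\beta=\left(|\lambda_2||\lambda_3|\cdots|\lambda_{\frac{n+1}{2}}|\right)^2$.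
   Context: $circ(c_1,\dots,c_n)$ is the circulant matrix whose $(i,j)$ entry is $c_{j-i+1}$ (subscripts mod $n$ in $\{1,\dots,n\}$). $Q_g$ is the $n\times n$ permutation matrix whose $(i,j)$ entry is $1$ if $j\equiv 1+(i-1)g\pmod n$ and $0$ otherwise. A $g$-circulant matrix is one in which each row is the preceding row cyclically shifted $g$ places to the right; $Q_gC$ is the $g$-circulant matrix with the same first row as $C$. *)

(* Defs.v *)
From HB Require Import structures.
From mathcomp Require Import all_boot all_order all_algebra all_fingroup all_solvable.
From mathcomp Require Import reals trigo exp.
From mathcomp Require Import complex.
Set Implicit Arguments. Unset Strict Implicit. Unset Printing Implicit Defensive.
Import Order.TTheory GRing.Theory Num.Theory.
Local Open Scope ring_scope.

(* Indices are 0-based: the paper's index i in {1..n} is i-1 : 'I_n here. *)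

(* the element of 'I_n with value k mod n, given any element of 'I_n (so n > 0) *)
Definition ordmod (n : nat) (i : 'I_n) (k : nat) : 'I_n :=
  Ordinal (ltn_pmod k (leq_ltn_trans (leq0n i) (ltn_ord i))).

Definition circ (R : Type) (n : nat) (c : 'I_n -> R) : 'M[R]_n :=
  \matrix_(i < n, j < n) c (ordmod i (j + n - i)%N).

(* Q_g: entry (i,j) = 1 iff j = i*g mod n (0-based form of j = 1+(i-1)g mod n) *)
Definition Qg (R : pzRingType) (n g : nat) : 'M[R]_n :=
  \matrix_(i < n, j < n) (((j : nat) == (i * g) %% n)%N)%:R.

Definition generates_units_mod (n g : nat) : Prop :=
  exists u : {unit 'Z_n}, val u = (g%:R : 'Z_n) /\ generator [set: {unit 'Z_n}] u.

Definition expi (R : realType) (t : R) : R[i] := (cos t +i* sin t)%C.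

Definition circ_eig (R : realType) (n : nat) (c : 'I_n -> R) (k : nat) : R[i] :=
  \sum_(l < n) (c l)%:C%C * expi (2 * pi / n%:R) ^+ (k * l).

(* eigenvalues with multiplicity: the complex characteristic polynomial splits
   with exactly the given roots *)
Definition eigenvalues_are (R : realType) (n : nat) (A : 'M[R]_n) (s : seq R[i]) : Prop :=
  char_poly (map_mx (fun x : R => x%:C%C) A) = \prod_(mu <- s) ('X - mu%:P).

Definition cmod (R : realType) (z : R[i]) : R := ComplexField.Normc.normc z.

(* Main.v *)
Require Import Defs.
From HB Require Import structures.
From mathcomp Require Import all_boot all_order all_algebra all_fingroup all_solvable.
From mathcomp Require Import reals trigo exp.
From mathcomp Require Import complex.
From mathcomp Require Import zify ring lra.
Import Order.TTheory GRing.Theory Num.Theory.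
Local Open Scope ring_scope.
Lemma nt_facts n g : prime n -> (0 < g < n)%N -> generates_units_mod n g ->
  [/\ (forall k, g ^ k %% n != 0)%N,
      (forall a b, a < n.-1 -> b < n.-1 -> g ^ a %% n = g ^ b %% n -> a = b)%N
    & (g ^ n.-1 %% n = 1)%N].
Proof.
move=> pn /andP[g0 gn] [u [uval ugen]].
have n1 : (1 < n)%N by apply: prime_gt1.
have ordu : #[u]%g = n.-1.
  rewrite orderE -(eqP ugen) -totient_prime //.
  by rewrite -card_units_Zp ?prime_gt0.
have valX k : val (u ^+ k)%g = (g ^ k)%:R :> 'Z_n by rewrite FinRing.val_unitX uval natrX.
have valn k : ((g ^ k)%:R : 'Z_n) = (g ^ k %% n)%N :> nat by rewrite val_Zp_nat.
split.
- move=> k; apply/negP => /eqP H.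
  have : (n %| g ^ k)%N by rewrite /dvdn H.
  rewrite Euclid_dvdX // => /andP[] /dvdn_leq; lia.
- move=> a b an bn H.
  have : (u ^+ a == u ^+ b)%g.
    apply/eqP/val_inj; rewrite !valX; apply/val_inj; by rewrite /= !valn.
  rewrite eq_expg_mod_order ordu !modn_small // => /eqP //.
- have : val (u ^+ n.-1)%g = 1 by rewrite -ordu expg_order.
  rewrite FinRing.val_unitX uval -natrX.
  move=> /(congr1 (fun x : 'Z_n => nat_of_ord x)).
  by rewrite val_Zp_nat //.
Qed.
Lemma modE1 (n l i : nat) : (i < n)%N -> (l < n)%N -> ((((l + i) %% n) + n - i) %% n)%N = l.
Proof.
move=> iN lN.
rewrite -addnBA; last exact: ltnW.
rewrite modnDml -addnA subnKC; last exact: ltnW.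
by rewrite modnDr modn_small.
Qed.
Section Expi.
Variable R : realType.
Local Notation C := R[i].

Lemma expiD (a b : R) : expi a * expi b = expi (a + b).
Proof.
rewrite /expi sinD cosD; apply/eqP; rewrite eq_complex /=; apply/andP; split; apply/eqP; lra.
Qed.

Lemma expiX (t : R) k : expi t ^+ k = expi (k%:R * t).
Proof.
elim: k => [|k IH].
  by rewrite expr0 mul0r /expi cos0 sin0.
by rewrite exprS IH expiD mulrS mulrDl mul1r.
Qed.

Lemma expi_neq1 (t : R) : 0 < t -> t < pi *+ 2 -> expi t != 1.
Proof.
move=> t0 t2; apply/negP => /eqP; rewrite /expi => -[c1 s0].
have [tp|tp] := ltrP t pi.
  by have := sin_gt0_pi (x:=t); rewrite t0 tp s0 ltxx => /(_ isT).
move: tp; rewrite le_eqVlt => /orP[/eqP tp|tp].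
  by move: c1; rewrite -tp cospi => h; lra.
have h : 0 < t - pi < pi by apply/andP; split; lra.
have := sin_gt0_pi h.
have hs : sin t = - sin (t - pi) by rewrite -sinDpi subrK.
lra.
Qed.

Lemma expi_prim m : (0 < m)%N -> m.-primitive_root (expi (2 * pi / m%:R : R)).
Proof.
move=> m0; apply/andP; split => //; apply/forallP => i.
rewrite unity_rootE expiX.
have mR : (0 : R) < m%:R by rewrite ltr0n.
have mR0 : m%:R != 0 :> R by rewrite gt_eqF.
have [->|ne] := eqVneq i.+1 m.
  rewrite mulrCA mulfV // mulr1 mulr_natl.
  by rewrite /expi cos2pi sin2pi eqxx.
apply/eqP/negbTE/expi_neq1.
  by apply: mulr_gt0; [rewrite ltr0n | apply: mulr_gt0; [apply: mulr_gt0; [| exact: pi_gt0] | rewrite invr_gt0]].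
have im : (i.+1 < m)%N by rewrite ltn_neqAle ne ltn_ord.
have -> : i.+1%:R * (2 * pi / m%:R) = (i.+1%:R / m%:R) * ((pi : R) *+ 2) by ring.
have p2 : 0 < (pi : R) *+ 2 by have := @pi_gt0 R; rewrite mulr2n; lra.
rewrite gtr_pMl //.
by rewrite ltr_pdivrMr // mul1r ltr_nat.
Qed.

Lemma expi_conj (t : R) : expi t * (expi t)^*%C = 1.
Proof.
rewrite /expi /=; apply/eqP; rewrite eq_complex /=; apply/andP; split; apply/eqP.
  by have := cos2Dsin2 t; rewrite !expr2 => <-; ring.
ring.
Qed.
End Expi.
Definition cyc_mx (T : comNzRingType) N (x : T) (a : nat -> T) : 'M[T]_N :=
  \matrix_(i, j) (x *+ ((i : nat) == j) - (((i : nat) == (j.+1 %% N)%N)%:R * a (j : nat))).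

Lemma det_cyc (T : comNzRingType) N (x : T) (a : nat -> T) :
  \det (@cyc_mx T N.+2 x a) = x ^+ N.+2 - \prod_(i < N.+2) a i.
Proof.
rewrite (expand_det_row _ ord0) [in LHS]big_ord_recr [in LHS]big_ord_recl /=.
rewrite big1 ?add0r; last first.
  move=> j _; rewrite !mxE /= /bump /= add1n modn_small; last by rewrite !ltnS ltn_ord.
  by rewrite mul0r subr0 mul0r.
rewrite !mxE /= modnn mul0r subr0 mulr1n mulr0n addr0 sub0r.
have -> : widen_ord (leqnSn N.+1) ord0 = ord0 :> 'I_N.+2 by apply: val_inj.
rewrite /cofactor /= !add0n expr0 mul1r.
rewrite det_trig; last first.
  apply/is_trig_mxP => i j ij; rewrite !mxE /= /bump /= ?add1n.
  have -> : (i.+1 == j.+1) = false by apply/eqP; lia.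
  have -> : (i.+1 == j.+2 %% N.+2)%N = false.
    case: (ltnP j.+2 N.+2) => jN.
      by rewrite modn_small //; apply/eqP; lia.
    have -> : j.+2 = N.+2 by move: (ltn_ord j); lia.
    by rewrite modnn.
  by rewrite mulr0n mul0r subr0.
rewrite -det_tr det_trig; last first.
  apply/is_trig_mxP => i j ij; rewrite !mxE /= /bump /= ?add1n.
  have -> : (N < i)%N = false by rewrite ltnNge -ltnS ltn_ord.
  rewrite add0n modn_small; last by rewrite ltnS ltn_ord.
  have -> : (j.+1 == i) = false by apply/eqP; lia.
  have -> : (j.+1 == i.+1) = false by apply/eqP; lia.
  by rewrite mulr0n mul0r subr0.
have d1 : forall i : 'I_N.+1, (row' ord0 (col' ord0 (@cyc_mx T N.+2 x a))) i i = x.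
  move=> i; rewrite !mxE /= /bump /= ?add1n eqxx mulr1n.
  have -> : (i.+1 == i.+2 %% N.+2)%N = false.
    case: (ltnP i.+2 N.+2) => iN.
      by rewrite modn_small //; apply/eqP; lia.
    have -> : i.+2 = N.+2 by move: (ltn_ord i); lia.
    by rewrite modnn.
  by rewrite mul0r subr0.
have -> : \prod_(i < N.+1) (row' ord0 (col' ord0 (@cyc_mx T N.+2 x a))) i i = x ^+ N.+1.
  by rewrite (eq_bigr (fun _ => x)) ?prodr_const ?card_ord // => i _; exact: d1.
have d2 : forall i : 'I_N.+1, (row' ord0 (col' ord_max (@cyc_mx T N.+2 x a)))^T i i = - a i.
  move=> i; rewrite !mxE /= /bump /= ?add1n.
  have -> : (N < i)%N = false by rewrite ltnNge -ltnS ltn_ord.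
  rewrite add0n modn_small; last by rewrite ltnS ltn_ord.
  have -> : (i.+1 == i) = false by apply/eqP; lia.
  by rewrite eqxx mulr0n mul1r sub0r.
have -> : \prod_(i < N.+1) (row' ord0 (col' ord_max (@cyc_mx T N.+2 x a)))^T i i = \prod_(i < N.+1) - a i.
  by apply: eq_bigr => i _; exact: d2.
rewrite -exprS prodrN card_ord.
have sg : forall y : T, (-1) ^+ N.+1 * ((-1) ^+ N.+1 * y) = y.
  by move=> y; rewrite mulrA -exprD addnn -mul2n exprM sqrrN !expr1n mul1r.
rewrite sg [in RHS]big_ord_recr /= mul1r mulNr.
by rewrite mulrC.
Qed.
Lemma char_poly_sim (F : fieldType) n (A B W : 'M[F]_n) :
  A *m W = W *m B -> \det W != 0 -> char_poly A = char_poly B.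
Proof.
move=> AW dW.
pose W' := map_mx (@polyC F) W.
have key : char_poly_mx A *m W' = W' *m char_poly_mx B.
  rewrite /char_poly_mx mulmxBl mulmxBr mul_scalar_mx mul_mx_scalar.
  by rewrite -!map_mxM AW.
have := congr1 determinant key; rewrite !det_mulmx /W' det_map_mx.
move=> h; apply: (mulIf (x := (\det W)%:P)); first by rewrite polyC_eq0.
by rewrite h mulrC.
Qed.
Lemma prod_scaled_roots (F : fieldType) N (b z : F) : N.-primitive_root z ->
  \prod_(j <- iota 0 N) ('X - (b * z ^+ j)%:P) = 'X^N - (b ^+ N)%:P.
Proof.
move=> pz; have N0 := prim_order_gt0 pz.
have [->|b0] := eqVneq b 0.
  rewrite expr0n gtn_eqF // subr0.
  under eq_bigr do rewrite mul0r subr0.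
  by rewrite -[N in iota 0 N]subn0 -/(index_iota 0 N) prodr_const_nat subn0.
have := @all_roots_prod_XsubC _ ('X^N - (b ^+ N)%:P) [seq b * z ^+ j | j <- iota 0 N].
rewrite size_XnsubC // size_map size_iota lead_coefXnsubC // scale1r big_map => -> //.
- apply/allP => r /mapP[j _ ->]; rewrite rootE !hornerE exprMn -exprM mulnC exprM.
  by rewrite (prim_expr_order pz) expr1n mulr1 subrr.
- rewrite uniq_rootsE map_inj_in_uniq ?iota_uniq // => i j.
  rewrite !mem_iota !add0n => /andP[_ iN] /andP[_ jN] /(mulfI b0) /eqP.
  by rewrite (eq_prim_root_expr pz) !modn_small // => /eqP.
Qed.
Lemma prod_pair (T : comNzRingType) (F : nat -> T) h m :
  \prod_(m <= k < m + h.*2) F k =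
  \prod_(m <= k < m + h) (F k * F (m.*2 + h.*2 - 1 - k)%N).
Proof.
elim: h m => [|h IH] m.
  by rewrite !addn0 !big_geq.
have -> : (m + h.+1.*2 = (m + h.*2 + 1).+1)%N by rewrite doubleS; lia.
rewrite big_ltn; last by lia.
rewrite big_nat_recr /=; last by lia.
have -> : (m + h.*2 + 1 = m.+1 + h.*2)%N by lia.
rewrite IH.
rewrite [in RHS]big_ltn; last by lia.
have -> : (m + h.+1 = m.+1 + h)%N by lia.
rewrite -!mulrA; congr (_ * _).
have -> : (m.*2 + h.+1.*2 - 1 - m = m.+1 + h.*2)%N by rewrite doubleS; lia.
rewrite mulrC; congr (_ * _).
apply: eq_big_nat => k /andP[k1 k2]; congr (_ * F _).
rewrite doubleS; lia.
Qed.
Lemma expi_conjE (R : realType) n : (0 < n)%N ->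
  (expi (2 * pi / n%:R : R))^*%C = expi (2 * pi / n%:R : R) ^+ n.-1.
Proof.
move=> n0; have pz := @expi_prim R n n0.
set w := expi _.
have w0 : w != 0.
  apply/eqP => w0; move: (@expi_conj R (2 * pi / n%:R)); rewrite -/w w0 mul0r.
  by move=> /eqP; rewrite eq_sym oner_eq0.
apply: (mulfI w0); rewrite expi_conj -exprS prednK //.
by rewrite (prim_expr_order pz).
Qed.

Lemma circ_eig_conj (R : realType) n (c : 'I_n -> R) k : (0 < n)%N -> (k <= n)%N ->
  circ_eig c (n - k) = (circ_eig c k)^*%C.
Proof.
move=> n0 kn; have pz := @expi_prim R n n0.
rewrite /circ_eig rmorph_sum; apply: eq_bigr => l _.
rewrite rmorphM; congr (_ * _); first by rewrite /= oppr0.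
have -> : expi (2 * pi / n%:R : R) ^+ ((n - k) * l) = expi (2 * pi / n%:R : R) ^+ (n.-1 * (k * l)).
  apply/eqP; rewrite (eq_prim_root_expr pz).
  rewrite -(eqn_modDr (k * l)).
  have -> : ((n - k) * l + k * l = n * l)%N by rewrite -mulnDl subnK.
  have -> : (n.-1 * (k * l) + k * l = n * (k * l))%N.
    by rewrite -[X in (_ + X)%N]mul1n -mulnDl addn1 prednK.
  by rewrite !modnMr.
by rewrite exprM -expi_conjE // -rmorphXn.
Qed.
Lemma mul_conj_cmod (R : realType) (z : R[i]) : z * z^*%C = ((cmod z) ^+ 2)%:C%C.
Proof.
case: z => a b; rewrite /cmod /= sqr_sqrtr ?addr_ge0 ?sqr_ge0 //.
apply/eqP; rewrite eq_complex /=; apply/andP; split; apply/eqP; ring.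
Qed.

Lemma beta_prod (R : realType) n (c : 'I_n -> R) : (0 < n)%N -> odd n ->
  \prod_(1 <= k < n) circ_eig c k =
  ((\prod_(1 <= k < (n.+1)./2) cmod (circ_eig c k)) ^+ 2)%:C%C.
Proof.
move=> n0 on.
have nE : n = (1 + (n./2).*2)%N by rewrite -{1}(odd_double_half n) on.
have hE : ((n.+1)./2 = 1 + n./2)%N.
  have -> : n.+1 = (1 + n./2).*2 by rewrite {1}nE; rewrite doubleD; lia.
  by rewrite doubleK.
rewrite hE {1}nE prod_pair -prodrXl rmorph_prod.
apply: eq_big_nat => k /andP[k1 k2].
have -> : ((1%N).*2 + (n./2).*2 - 1 - k = n - k)%N by rewrite {2}nE; lia.
by rewrite circ_eig_conj // ?mul_conj_cmod //; lia.
Qed.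
Section Main.
Variable R : realType.
Variable N g : nat.
Local Notation n := N.+3.
Variable c : 'I_n -> R.
Hypothesis H1 : forall k, (g ^ k %% n != 0)%N.
Hypothesis H2 : forall a b, (a < N.+2)%N -> (b < N.+2)%N -> (g ^ a %% n = g ^ b %% n)%N -> a = b.
Hypothesis H3 : (g ^ N.+2 %% n = 1)%N.

Local Notation lam := (circ_eig c).
Let w : R[i] := expi (2 * pi / n%:R : R).
Let pw : n.-primitive_root w := @expi_prim R n isT.

Definition ee (m : 'I_n) : nat := if (m : nat) == 0%N then 0%N else (g ^ m.-1 %% n)%N.
Definition nxt (m : 'I_n) : 'I_n :=
  if (m : nat) == 0%N then ord0 else if (m : nat) == N.+2 then inord 1 else inord m.+1.

Lemma ee_lt m : (ee m < n)%N.
Proof. by rewrite /ee; case: ifP => // _; rewrite ltn_mod. Qed.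

Lemma ee_inj : injective ee.
Proof.
move=> i j; rewrite /ee.
case: ifP => i0; case: ifP => j0.
- by move=> _; apply: val_inj; rewrite /= (eqP i0) (eqP j0).
- by move=> h; have := H1 j.-1; rewrite -h.
- by move=> h; have := H1 i.-1; rewrite h.
move=> /H2 h; apply: val_inj => /=.
have : i.-1 = j.-1.
  apply: h; rewrite -ltnS prednK ?lt0n ?i0 ?j0 //; apply: ltn_ord.
by move=> /(congr1 S); rewrite !prednK // lt0n ?i0 ?j0.
Qed.

Lemma nxt_val m : (nxt m : nat) =
  if (m : nat) == 0%N then 0%N else if (m : nat) == N.+2 then 1%N else m.+1.
Proof.
rewrite /nxt; case: ifP => // m0; case: ifP => mN; rewrite inordK //.
have := ltn_ord m; move: mN => /eqP; lia.
Qed.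

Lemma ee_nxt m : (g * ee m == ee (nxt m) %[mod n])%N.
Proof.
rewrite {2}/ee nxt_val /ee.
case: (eqVneq (m : nat) 0%N) => m0; first by rewrite /= muln0.
case: (eqVneq (m : nat) N.+2) => mN /=.
  by rewrite expn0 mN /= modnMmr -expnS H3 modn_small.
by rewrite modnMmr -expnS prednK ?modn_mod // lt0n.
Qed.

Definition Wm : 'M[R[i]]_n := Vandermonde n (\row_m w ^+ ee m).
Definition Bm : 'M[R[i]]_n := \matrix_(p, m) ((p == nxt m)%:R * lam (ee m)).

Lemma Wm_entry j m : Wm j m = w ^+ (ee m * j).
Proof. by rewrite /Wm /Vandermonde !mxE exprM. Qed.

Lemma ordmodE (i : 'I_n) k : ordmod i k = Ordinal (ltn_pmod k (isT : (0 < n)%N)).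
Proof. exact: val_inj. Qed.

Lemma QC_entry i j : (Qg R n g *m circ c) i j =
  c (Ordinal (ltn_pmod (j + n - (i * g %% n)) (isT : (0 < n)%N))).
Proof.
pose i' : 'I_n := Ordinal (ltn_pmod (i * g) (isT : (0 < n)%N)).
rewrite mxE (bigD1 i') //= big1 => [|k kne]; rewrite !mxE.
  by rewrite eqxx mul1r addr0 ordmodE; congr c; apply: val_inj.
have -> : ((k : nat) == (i * g %% n)%N) = false.
  by apply/negbTE; apply: contra kne => /eqP h; apply/eqP/val_inj.
by rewrite mul0r.
Qed.

Lemma step1 : map_mx (fun x => x%:C%C) (Qg R n g *m circ c) *m Wm = Wm *m Bm.
Proof.
apply/matrixP => i m.
rewrite [RHS]mxE (bigD1 (nxt m)) //= big1 => [|p pne]; last first.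
  by rewrite !mxE (negbTE pne) mul0r mulr0.
rewrite addr0 [Bm _ _]mxE eqxx mul1r Wm_entry [LHS]mxE.
pose i' := (i * g %% n)%N.
have i'n : (i' < n)%N by rewrite ltn_mod.
pose h (l : 'I_n) : 'I_n := Ordinal (ltn_pmod (l + i') (isT : (0 < n)%N)).
have hinj : injective h.
  move=> l1 l2 /(congr1 val) /= /eqP; rewrite eqn_modDr !modn_small // => /eqP.
  exact: val_inj.
rewrite (reindex_inj hinj) /=.
have E1 (l : 'I_n) : Ordinal (ltn_pmod (h l + n - i') (isT : (0 < n)%N)) = l.
  apply: val_inj; change ((((l + i') %% n) + n - i') %% n = l)%N.
  exact: modE1.
have E2 (l : 'I_n) : w ^+ (ee m * h l) = w ^+ (ee m * l) * w ^+ (ee m * i').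
  rewrite -exprD; apply/eqP; rewrite (eq_prim_root_expr pw) /= -mulnDr.
  by rewrite modnMmr.
under eq_bigr do rewrite mxE QC_entry Wm_entry E1 E2 mulrA.
rewrite -big_distrl /= mulrC; congr (_ * _).
  apply/eqP; rewrite (eq_prim_root_expr pw).
  rewrite /i' modnMmr.
  have -> : (ee m * (i * g) = i * (g * ee m))%N by nia.
  by rewrite -modnMmr (eqP (ee_nxt m)) modnMmr mulnC.
Qed.

Lemma step2 : \det Wm != 0.
Proof.
rewrite /Wm det_Vandermonde; apply/prodf_neq0 => i _; apply/prodf_neq0 => j ij.
rewrite !mxE subr_eq0; apply/negP => /eqP /eqP.
rewrite (eq_prim_root_expr pw) (modn_small (ee_lt j)) (modn_small (ee_lt i)).
move=> /eqP /ee_inj ji; move: ij; rewrite ji ltnn //.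
Qed.

Lemma step3 : char_poly Bm =
  ('X - (lam 0%N)%:P) * ('X^(N.+2) - (\prod_(m < N.+2) lam (g ^ m %% n)%N)%:P).
Proof.
have nx0 : nxt ord0 = ord0 by apply: val_inj.
rewrite /char_poly (expand_det_col _ ord0) (bigD1 ord0) //= big1 ?addr0; last first.
  move=> i i0; rewrite !mxE nx0 (negbTE i0).
  by rewrite /= !mulr0n mul0r polyC0 subr0 mul0r.
rewrite !mxE nx0 eqxx mulr1n mul1r /cofactor /= expr0 mul1r.
have -> : row' ord0 (col' ord0 (char_poly_mx Bm)) =
    @cyc_mx _ N.+2 'X (fun k => (lam (g ^ k %% n)%N)%:P).
  apply/matrixP => i j; rewrite !mxE.
  have -> : (lift ord0 i == lift ord0 j) = ((i : nat) == j) by [].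
  have -> : ee (lift ord0 j) = (g ^ j %% n)%N by [].
  congr (_ - _); rewrite polyCM polyC_natr; congr (_%:R * _).
  have -> : (lift ord0 i == nxt (lift ord0 j)) = (i.+1 == nxt (lift ord0 j) :> nat) by [].
  rewrite nxt_val /=.
  case: (eqVneq j.+1 N.+2) => jN.
    by rewrite jN modnn eqSS.
  rewrite modn_small ?eqSS //.
  have jl : (j < N.+2)%N := ltn_ord j.
  by rewrite ltn_neqAle jN jl.
by rewrite det_cyc rmorph_prod.
Qed.

Lemma step4 : \prod_(m < N.+2) lam (g ^ m %% n)%N = \prod_(1 <= k < n) lam k.
Proof.
rewrite big_add1 /= big_mkord.
pose sg (m : 'I_N.+2) : 'I_N.+2 := inord (g ^ m %% n).-1.
have sgv (m : 'I_N.+2) : (sg m : nat) = (g ^ m %% n).-1.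
  rewrite inordK // -ltnS prednK ?lt0n ?H1 //; exact: ltn_mod.
have sginj : injective sg.
  move=> m1 m2 /(congr1 val) /=; rewrite !sgv => /(congr1 S).
  rewrite !prednK ?lt0n ?H1 // => /H2 h; apply: val_inj; apply: h => //.
rewrite [RHS](reindex_inj sginj) /=; apply: eq_bigr => m _.
by rewrite sgv prednK // lt0n H1.
Qed.

Lemma main_char :
  char_poly (map_mx (fun x => x%:C%C) (Qg R n g *m circ c)) =
  ('X - (lam 0%N)%:P) * ('X^(N.+2) - (\prod_(1 <= k < n) lam k)%:P).
Proof.
by rewrite (@char_poly_sim _ _ _ _ _ step1 step2) step3 step4.
Qed.
End Main.
Theorem mainTheorem6 (R : realType) (n g : nat) (c : 'I_n -> R) :
  prime n -> odd n -> (0 < g < n)%N -> generates_units_mod n g ->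
  let lambda := circ_eig c in
  let beta : R := (\prod_(1 <= k < (n.+1)./2) cmod (lambda k)) ^+ 2 in
  let b : R := beta `^ (n.-1%:R)^-1 in
  let phi : R[i] := expi (2 * pi / n.-1%:R) in
  eigenvalues_are (Qg R n g *m circ c)
    (lambda 0%N :: [seq (b%:C * phi ^+ j)%C | j <- iota 0 n.-1]).
Proof.
move=> pn on gn gen.
have [H1 H2 H3] := @nt_facts n g pn gn gen.
have n3 : (2 < n)%N.
  have := prime_gt1 pn; rewrite leq_eqVlt => /orP[/eqP n2|] //.
  by move: on; rewrite -n2.
have bp := @beta_prod R n c (ltnW (ltnW n3)) on.
move: n n3 c pn on gn gen H1 H2 H3 bp => [|[|[|N]]] // _ c _ _ _ _ H1 H2 H3 bp.
move=> lambda beta b phi.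
rewrite /eigenvalues_are (@main_char R N g c H1 H2 H3) big_cons; congr (_ * _).
rewrite big_map (@prod_scaled_roots _ _ _ _ (@expi_prim R N.+2 isT)).
rewrite bp; congr ('X^_ - _%:P).
have be0 : 0 <= beta by rewrite /beta sqr_ge0.
rewrite -rmorphXn /=; congr (_%:C%C).
rewrite -[b ^+ _]powR_mulrn ?powR_ge0 // /b -powRrM mulVf ?powRr1 //.
by rewrite pnatr_eq0.
Qed.
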